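(* Let $A\in\mathbb Z^{d\times n}$ with $\ker(A)\cap\mathbb N^n=\{0\}$. Suppose $b\in\ker(A)$ reduces the distance of a nonzero $x\in\ker(A)$, and $z\in\ker(A)$ has a conformal decomposition $z=x+y$ with $y\in\ker(A)$. Then $b$ reduces the distance of $z$.
   Context: For $z\in\mathbb Z^n$, $z^\pm\in\mathbb N^n$ are the unique vectors with disjoint supports and $z=z^+-z^-$; $\|\cdot\|$ is the $1$-norm. $z=x+y$ is a conformal decomposition if $z^+=x^++y^+$ and $z^-=x^-+y^-$. For nonzero $w\in\ker(A)$, $b\in\ker(A)$ reduces the distance of $w$ if there exist $(p,q)\in\{(w^+,w^-),(w^-,w^+)\}$ and $\varepsilon\in\{\pm1\}$ with $p+\varepsilon b\in\mathbb N^n$ and $\|p+\varepsilon b-q\|<\|w\|$. *)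

(* Defs.v *)
From HB Require Import structures.
From mathcomp Require Import all_boot all_order all_algebra.
Set Implicit Arguments. Unset Strict Implicit. Unset Printing Implicit Defensive.
Import Order.TTheory GRing.Theory Num.Theory.
Local Open Scope ring_scope.

Definition vpos n (z : 'cV[int]_n) : 'cV[int]_n := \col_i Num.max (z i 0) 0.
Definition vneg n (z : 'cV[int]_n) : 'cV[int]_n := \col_i Num.max (- z i 0) 0.

Definition norm1 n (z : 'cV[int]_n) : int := \sum_i `|z i 0|.

Definition nonneg n (z : 'cV[int]_n) : Prop := forall i, 0 <= z i 0.

Definition inker d n (A : 'M[int]_(d, n)) (z : 'cV[int]_n) : Prop := A *m z = 0.

Definition conformal n (z x y : 'cV[int]_n) : Prop :=
  z = x + y /\ vpos z = vpos x + vpos y /\ vneg z = vneg x + vneg y.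

Definition reduces_dist d n (A : 'M[int]_(d, n)) (b w : 'cV[int]_n) : Prop :=
  inker A w /\ w != 0 /\ inker A b /\
  exists (p q : 'cV[int]_n) (eps : int),
    ((p = vpos w /\ q = vneg w) \/ (p = vneg w /\ q = vpos w)) /\
    (eps = 1 \/ eps = -1) /\
    nonneg (p + eps *: b) /\
    norm1 (p + eps *: b - q) < norm1 w.

(* Main.v *)
Require Import Defs.
From HB Require Import structures.
From mathcomp Require Import all_boot all_order all_algebra.
From mathcomp Require Import ring lra.
Import Order.TTheory GRing.Theory Num.Theory.
Local Open Scope ring_scope.

Lemma posnegE {n} (w : 'cV[int]_n) i : vpos w i 0 - vneg w i 0 = w i 0.
Proof. rewrite !mxE /Order.max; repeat (case: ifPn => ?); lra. Qed.
Lemma posnegN {n} (w : 'cV[int]_n) i : vpos w i 0 + vneg w i 0 = `|w i 0|.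
Proof. rewrite !mxE /Order.max; case: (ltrP (w i 0) 0) => h;
 [rewrite ltr0_norm // | rewrite ger0_norm //]; repeat (case: ifPn => ?); lra. Qed.
Lemma vpos_ge0 {n} (w : 'cV[int]_n) i : 0 <= vpos w i 0.
Proof. by rewrite mxE le_max lexx orbT. Qed.
Lemma vneg_ge0 {n} (w : 'cV[int]_n) i : 0 <= vneg w i 0.
Proof. by rewrite mxE le_max lexx orbT. Qed.

Lemma norm_bound {n} (u v w : 'cV[int]_n) :
  (forall i, `|u i 0| <= `|v i 0| + `|w i 0|) -> norm1 u <= norm1 v + norm1 w.
Proof. by move=> H; rewrite /norm1 -big_split /=; apply: ler_sum => i _. Qed.
Lemma norm_eq {n} (u v w : 'cV[int]_n) :
  (forall i, `|u i 0| = `|v i 0| + `|w i 0|) -> norm1 u = norm1 v + norm1 w.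
Proof. by move=> H; rewrite /norm1 -big_split /=; apply: eq_bigr => i _. Qed.

Theorem lemma7p7 (d n : nat) (A : 'M[int]_(d, n)) (b x y z : 'cV[int]_n) :
  (forall v : 'cV[int]_n, inker A v -> nonneg v -> v = 0) ->
  inker A x -> x != 0 -> inker A b -> reduces_dist A b x ->
  inker A z -> inker A y -> conformal z x y ->
  reduces_dist A b z.
Proof.
move=> _ _ x0 _ [_ [_ [Hb [p [q [e [Hpq [He [Hnn Hlt]]]]]]]]] Hz Hy [Ez [Ep En]].
have Epi i : vpos z i 0 = vpos x i 0 + vpos y i 0 by rewrite Ep mxE.
have Eni i : vneg z i 0 = vneg x i 0 + vneg y i 0 by rewrite En mxE.
have Nz i : `|z i 0| = `|x i 0| + `|y i 0|.
  by rewrite -!posnegN Epi Eni; ring.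
split; first done. split.
  apply/negP => /eqP z0; move/negP: x0; apply; apply/eqP/matrixP => i j.
  rewrite ord1 [RHS]mxE; apply/eqP; rewrite -normr_eq0; apply/eqP.
  have := Nz i; rewrite z0 mxE normr0.
  have := normr_ge0 (x i 0); have := normr_ge0 (y i 0); lra.
split; first done.
case: Hpq => [[? ?]|[? ?]]; subst p q.
- exists (vpos z), (vneg z), e; split; first by left.
  split; first done. split.
    move=> i; move: (Hnn i) (vpos_ge0 y i); rewrite Ep !mxE; lra.
  apply: (le_lt_trans (y := norm1 (vpos x + e *: b - vneg x) + norm1 y)).
    2: by rewrite (@norm_eq _ z x y Nz) ltrD2r.
  apply: norm_bound => i; rewrite Ep En -(posnegE y i) !mxE.
  apply: (le_trans _ (ler_normD _ _)).
  rewrite le_eqVlt; apply/orP; left; apply/eqP; congr (`|_|); ring.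
- exists (vneg z), (vpos z), e; split; first by right.
  split; first done. split.
    move=> i; move: (Hnn i) (vneg_ge0 y i); rewrite En !mxE; lra.
  apply: (le_lt_trans (y := norm1 (vneg x + e *: b - vpos x) + norm1 y)).
    2: by rewrite (@norm_eq _ z x y Nz) ltrD2r.
  apply: norm_bound => i; rewrite Ep En -(posnegE y i) !mxE.
  apply: (le_trans _ (ler_normB _ _)).
  rewrite le_eqVlt; apply/orP; left; apply/eqP; congr (`|_|); ring.
Qed.
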